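(* Let $\hat k \ge k$ and let $(\hat g, \hat q) \in \mathcal{G} \times \mathcal{Q}$ be a minimizer of $$\min_{\hat g \in \mathcal{G},\, \hat q \in \mathcal{Q}} \; \mathbb{E}_{(x,x') \sim p(x,x')}\Big[\sum_{\hat a \in \hat{\mathcal{A}}} \hat q(\hat a \mid x, x')\,\|x' - \hat g(x,\hat a)\|_2^2 + \beta\, H(\hat q(\cdot \mid x, x'))\Big],$$ where $\beta>0$. For $(x,a) \in \mathrm{supp}[p(x,a)]$ and $\hat a \in \hat{\mathcal A}$, put $v(\hat a \mid x, a) := \hat q(\hat a \mid x, g(x,a))$. Then: 1. If Assumptions A1 and A2 hold, there is a function $v : \mathrm{supp}[p(x,a)] \to \hat{\mathcal A}$ such that for all $(x,a) \in \mathrm{supp}[p(x,a)]$ and all $\hat a\in\hat{\mathcal A}$, $v(\hat a \mid x,a) = \mathbf{1}(\hat a = v(x,a))$. 2. If Assumptions A1, A2 and A3 hold, there is a map $v : \mathrm{supp}[p(a)] \to \hat{\mathcal A}$ such that for all $(x,a) \in \mathrm{supp}[p(x,a)]$ and all $\hat a\in\hat{\mathcal A}$, $v(\hat a \mid x,a) = \mathbf{1}(\hat a = v(a))$. 3. If Assumptions A1, A2, A3 and A4 hold, the map $v : \mathrm{supp}[p(a)] \to \hat{\mathcal A}$ from part 2 is injective.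
   Context: Data-generating process: $\mathcal X := [0,1]^d$, $\mathcal X' := [0,1]^{d'}$, $\mathcal A := \{1,\dots,k\}$. A state $x \in \mathcal X$ is drawn from a Lebesgue density $p(x)$ on $\mathcal X$. An action is then drawn as $a \sim \pi(a \mid x)$, where $\pi(\cdot\mid x)$ is a probability mass function on $\mathcal A$. The next observation is $x' = g(x,a)$ for a fixed function $g : \mathcal X \times \mathcal A \to \mathcal X'$. Write $p(x,a) := p(x)\pi(a\mid x)$, $p(a) := \int p(x,a)\,dx$, and $p(x\mid a) := p(x,a)/p(a)$ when $p(a)>0$. Let $p(x,x')$ denote the joint law of $(x, g(x,a))$ under this process, so $\mathbb E_{p(x,x')}[h(x,x')] = \mathbb E_{p(x,a)}[h(x,g(x,a))]$. Supports: $\mathrm{supp}[p(a)] := \{a \in \mathcal A : p(a)>0\}$. For $a \in \mathrm{supp}[p(a)]$, $\mathrm{supp}[p(x\mid a)]$ is the set of $x_0 \in \mathcal X$ such that every open neighborhood $U$ of $x_0$ satisfies $\int_U p(x\mid a)\,dx > 0$. Also $\mathrm{supp}[p(x,a)] := \bigcup_{a \in \mathrm{supp}[p(a)]} \mathrm{supp}[p(x\mid a)] \times \{a\}$. Hypothesis spaces: $\hat{\mathcal A} := \{1,\dots,\hat k\}$. $\mathcal G$ is the set of functions $\hat g : \mathcal X \times \hat{\mathcal A} \to \mathcal X'$ such that $x \mapsto \hat g(x,\hat a)$ is continuous for every $\hat a \in \hat{\mathcal A}$. $\mathcal Q$ is the set of functions $\hat q : \hat{\mathcal A} \times \mathcal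 X \times \mathcal X' \to [0,1]$ such that: (i) $\sum_{\hat a \in \hat{\mathcal A}} \hat q(\hat a \mid x,x') = 1$ for all $(x,x')$; (ii) $(x,x') \mapsto \hat q(\hat a \mid x, x')$ is continuous for every $\hat a$. Entropy: $H(\hat q(\cdot\mid x,x')) := -\sum_{\hat a} \hat q(\hat a\mid x,x')\log \hat q(\hat a \mid x,x')$, with the convention $0\log 0 = 0$. Assumptions: A1 (continuity): for all $a\in\mathcal A$, $x \mapsto g(x,a)$ is continuous. A2 (injectivity): for all $x \in \mathcal X$ and $a_1 \ne a_2$ in $\mathcal A$, $g(x,a_1) \ne g(x,a_2)$. A3: for every $a \in \mathrm{supp}[p(a)]$, $\mathrm{supp}[p(x\mid a)]$ is a connected subset of $\mathcal X$. A4: for all $a_1,a_2 \in \mathrm{supp}[p(a)]$, $\mathrm{supp}[p(x\mid a_1)] \cap \mathrm{supp}[p(x\mid a_2)] \ne \emptyset$. *)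

(* Defs.v *)
From HB Require Import structures.
From mathcomp Require Import all_boot all_order all_algebra.
From mathcomp Require Import all_classical all_reals all_analysis.
Unset Printing Implicit Defensive.
Import Order.TTheory GRing.Theory Num.Theory.
Import numFieldNormedType.Exports.
Local Open Scope classical_set_scope.
Local Open Scope ring_scope.

Section Defs.
Context {R : realType}.

Definition cube (n : nat) : set 'rV[R]_n :=
  [set x | forall i : 'I_n, 0 <= x ord0 i <= 1].

(* Iterated Lebesgue integral over the cube [0,1]^n (coordinate by coordinate).
   For nonnegative Borel integrands this is the Lebesgue integral over [0,1]^n
   (Tonelli). *)
Fixpoint cube_int {n : nat} : ('rV[R]_n -> \bar R) -> \bar R :=
  match n with
  | 0%N => fun f => f 0
  | n'.+1 => fun f =>
      (\int[@lebesgue_measure R]_(t in `[0%R, 1%R]) @cube_int n' (fun v : 'rV[R]_n' =>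
                     f (row_mx (t%:M : 'M[R]_1) v)))%E
  end.

Definition borel_fun {n : nat} (f : 'rV[R]_n -> R) : Prop :=
  forall B : set R, open B ->
    (<<s [set U : set 'rV[R]_n | open U] >>) (f @^-1` B).

Definition sqnorm {n : nat} (v : 'rV[R]_n) : R := \sum_(i < n) v ord0 i ^+ 2.

Definition xlogx (t : R) : R := if t == 0 then 0 else t * ln t.

Definition entropy {kh d d' : nat} (qh : 'I_kh -> 'rV[R]_d -> 'rV[R]_d' -> R)
  (x : 'rV[R]_d) (x' : 'rV[R]_d') : R :=
  - \sum_(ah < kh) xlogx (qh ah x x').

Definition inG {kh d d' : nat} (gh : 'rV[R]_d -> 'I_kh -> 'rV[R]_d') : Prop :=
  (forall x ah, cube d x -> cube d' (gh x ah)) /\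
  (forall ah, {within cube d, continuous (fun x => gh x ah)}).

Definition inQ {kh d d' : nat} (qh : 'I_kh -> 'rV[R]_d -> 'rV[R]_d' -> R) : Prop :=
  (forall ah x x', cube d x -> cube d' x' -> 0 <= qh ah x x' <= 1) /\
  (forall x x', cube d x -> cube d' x' -> \sum_(ah < kh) qh ah x x' = 1) /\
  (forall ah, {within [set z : 'rV[R]_d * 'rV[R]_d' | cube d z.1 /\ cube d' z.2],
                 continuous (fun z => qh ah z.1 z.2)}).

(* The objective E_{p(x,a)}[ sum_ah qh(ah|x,x') ||x' - gh(x,ah)||^2 + beta H ]
   with x' = g(x,a). *)
Definition objective {k kh d d' : nat} (beta : R) (p : 'rV[R]_d -> R)
  (pi : 'I_k -> 'rV[R]_d -> R) (g : 'rV[R]_d -> 'I_k -> 'rV[R]_d')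
  (gh : 'rV[R]_d -> 'I_kh -> 'rV[R]_d') (qh : 'I_kh -> 'rV[R]_d -> 'rV[R]_d' -> R)
  : \bar R :=
  cube_int (fun x =>
    (\sum_(a < k) p x * pi a x *
       (\sum_(ah < kh) qh ah x (g x a) * sqnorm (g x a - gh x ah)
        + beta * entropy qh x (g x a)))%:E).

Definition pa {k d : nat} (p : 'rV[R]_d -> R) (pi : 'I_k -> 'rV[R]_d -> R)
  (a : 'I_k) : \bar R := cube_int (fun x => (p x * pi a x)%:E).

Definition pcond {k d : nat} (p : 'rV[R]_d -> R) (pi : 'I_k -> 'rV[R]_d -> R)
  (a : 'I_k) (x : 'rV[R]_d) : R := p x * pi a x / fine (pa p pi a).

Definition supp_a {k d : nat} (p : 'rV[R]_d -> R) (pi : 'I_k -> 'rV[R]_d -> R)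
  : set 'I_k := [set a | (0 < pa p pi a)%E].

(* supp[p(x|a)] : points x0 of X every open neighbourhood U of which (in X,
   i.e. U = V `&` X with V open in R^d) has positive p(.|a)-mass *)
Definition supp_x_a {k d : nat} (p : 'rV[R]_d -> R) (pi : 'I_k -> 'rV[R]_d -> R)
  (a : 'I_k) : set 'rV[R]_d :=
  [set x0 | cube d x0 /\ forall V : set 'rV[R]_d, open V -> V x0 ->
     (0 < cube_int (fun x => (\1_V x * pcond p pi a x)%:E))%E].

Definition supp_xa {k d : nat} (p : 'rV[R]_d -> R) (pi : 'I_k -> 'rV[R]_d -> R)
  (x : 'rV[R]_d) (a : 'I_k) : Prop := supp_a p pi a /\ supp_x_a p pi a x.

End Defs.

(* Main.v *)
Require Import Defs.
From HB Require Import structures.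
From mathcomp Require Import all_boot all_order all_algebra.
From mathcomp Require Import all_classical all_reals all_analysis.
From mathcomp Require Import ring lra.
Import Order.TTheory GRing.Theory Num.Theory.
Import numFieldNormedType.Exports.
Local Open Scope classical_set_scope.
Local Open Scope ring_scope.
Local Open Scope ring_scope.
Section A.
Context {R : realType}.
Local Open Scope ereal_scope.

Lemma int_le dd (T : measurableType dd) (mu : {measure set T -> \bar R}) (D : set T) (f1 f2 : T -> \bar R) :
  (forall x, D x -> 0 <= f1 x <= f2 x) ->
  \int[mu]_(x in D) f1 x <= \int[mu]_(x in D) f2 x.
Proof.
move=> H.
have H1 : forall x, D x -> 0 <= f1 x by move=> x /H /andP[].
have H2 : forall x, D x -> 0 <= f2 x.
  by move=> x /H /andP[h1 h2]; exact: le_trans h1 h2.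
rewrite (ge0_integralE _ H1) (ge0_integralE _ H2) /=.
apply: ge_ereal_sup => _ [h /= hf <-]; apply: ereal_sup_ubound; exists h => //=.
move=> x; apply: (le_trans (hf x)); rewrite /patch; case: ifPn => // /set_mem Dx.
by case/andP: (H x Dx).
Qed.

Lemma int_scale dd (T : measurableType dd) (mu : {measure set T -> \bar R}) (D : set T) (f : T -> \bar R) (r : R) : (0 <= r)%R ->
  (forall x, D x -> 0 <= f x) ->
  r%:E * \int[mu]_(x in D) f x <=
  \int[mu]_(x in D) (r%:E * f x).
Proof.
move=> r0 H.
have H2 : forall x, D x -> 0 <= r%:E * f x by move=> x Dx; rewrite mule_ge0 ?H.
rewrite (ge0_integralE _ H) (ge0_integralE _ H2) /= -ereal_supZl //; last first.
  apply/set0P; eexists; exists (@nnsfun0 _ T R); last reflexivity.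
  move=> /= x; rewrite /patch; case: ifPn => // /set_mem Dx.
  exact: H.
apply: ge_ereal_sup => _ [_ [h /= hf <-] <-]; apply: ereal_sup_ubound.
exists (scale_nnsfun h r0) => /=.
  move=> x; rewrite /patch; case: ifPn => /= [/set_mem Dx|nD].
    move: (hf x); rewrite /patch mem_set //= EFinM => hx.
    by rewrite lee_wpmul2l ?lee_fin.
  move: (hf x); rewrite /patch (negbTE nD) => hx.
  change (r * HBNNSimple.NonNegSimpleFun.sort h x <= 0)%R.
  by rewrite mulr_ge0_le0 // -lee_fin.
by rewrite -sintegralrM.
Qed.

Lemma cube_row n (t : R) (v : 'rV[R]_n) : (0 <= t <= 1)%R -> cube n v ->
  cube n.+1 (row_mx (t%:M : 'M[R]_1) v).
Proof.
move=> ht hv i; rewrite -(@splitK 1 n i); case: (@fintype.split 1 n i) => j /=.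
  have -> : row_mx (t%:M : 'M[R]_1) v ord0 (lshift n j) = (t%:M : 'M[R]_1) ord0 j.
    exact: row_mxEl.
  by rewrite mxE (ord1 j) eqxx mulr1n.
have -> : row_mx (t%:M : 'M[R]_1) v ord0 (rshift 1 j) = v ord0 j.
  exact: row_mxEr.
exact: hv.
Qed.

Arguments cube_row {n t v}.

Lemma itv01 (t : R) : [set` `[0%R, 1%R]] t -> (0 <= t <= 1)%R.
Proof. by rewrite /= in_itv. Qed.

Lemma cube_int_eq0 n (f : 'rV[R]_n -> \bar R) :
  (forall x, cube n x -> f x = 0) -> cube_int f = 0.
Proof.
elim: n f => [|n IH] f f0 /=; first by apply: f0 => -[].
apply: integral0_eq => t /itv01 ht; apply: IH => v hv; apply: f0.
exact: cube_row.
Qed.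

Lemma cube_int_ge0 n (f : 'rV[R]_n -> \bar R) :
  (forall x, cube n x -> 0 <= f x) -> 0 <= cube_int f.
Proof.
elim: n f => [|n IH] f f0 /=; first by apply: f0 => -[].
apply: integral_ge0 => t /itv01 ht; apply: IH => v hv; apply: f0.
exact: cube_row.
Qed.

Lemma cube_int_le n (f g : 'rV[R]_n -> \bar R) :
  (forall x, cube n x -> 0 <= f x <= g x) -> cube_int f <= cube_int g.
Proof.
elim: n f g => [|n IH] f g fg /=.
  have c0 : cube 0 (0%R : 'rV[R]_0) by move=> -[].
  by case/andP: (fg _ c0).
apply: int_le => t /itv01 ht; apply/andP; split.
  apply: cube_int_ge0 => v hv; by case/andP: (fg _ (cube_row ht hv)).
by apply: IH => v hv; apply: fg; exact: cube_row.
Qed.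

Lemma cube_int_scale n (f : 'rV[R]_n -> \bar R) (r : R) : (0 <= r)%R ->
  (forall x, cube n x -> 0 <= f x) ->
  r%:E * cube_int f <= cube_int (fun x => r%:E * f x).
Proof.
elim: n f => [|n IH] f r0 f0 /=; first by [].
apply: le_trans; first apply: int_scale => // t /itv01 ht.
  by apply: cube_int_ge0 => v hv; apply: f0; exact: cube_row.
apply: int_le => t /itv01 ht; apply/andP; split.
  by rewrite mule_ge0 // cube_int_ge0 // => v hv; apply: f0; exact: cube_row.
by apply: IH => // v hv; apply: f0; exact: cube_row.
Qed.
End A.
Definition cwt {T U : topologicalType} (A : set T) (f : T -> U) (x : T) :=
  f @ within A (nbhs x) --> f x.

Lemma cwt_of {T U : topologicalType} (A : set T) (f : T -> U) x :
  {within A, continuous f} -> A x -> cwt A f x.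
Proof. by move=> /subspace_continuousP H Ax; exact: H. Qed.

Lemma cwt_to {T U : topologicalType} (A : set T) (f : T -> U) :
  (forall x, A x -> cwt A f x) -> {within A, continuous f}.
Proof. by move=> H; apply/subspace_continuousP. Qed.

Lemma cwt_comp {T U V : topologicalType} (A : set T) (B : set U) (f : T -> U)
  (g : U -> V) x :
  cwt A f x -> (forall y, A y -> B (f y)) -> cwt B g (f x) ->
  cwt A (fun y => g (f y)) x.
Proof.
move=> cf AB cg; apply: cvg_trans cg => P HP.
have H := cf _ HP.
have W : within A (nbhs x) A by apply: withinT.
move: H W; rewrite !nbhs_filterE /= => H W.
exact: (@filterS2 _ (within A (nbhs x)) _ _ _ _ (fun z Hz Az => Hz (AB z Az)) H W).
Qed.

Lemma cwt_cont {T U : topologicalType} (A : set T) (f : T -> U) x :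
  {for x, continuous f} -> cwt A f x.
Proof. by move=> cf; apply: cvg_trans cf; apply: cvg_app; apply: cvg_within. Qed.

Lemma cwt_pair {T U V : topologicalType} (A : set T) (f : T -> U) (g : T -> V) x :
  cwt A f x -> cwt A g x -> cwt A (fun y => (f y, g y)) x.
Proof. by move=> cf cg; apply: cvg_pair. Qed.

Section cwtR.
Context {R : realType} {T : topologicalType}.
Variable (A : set T) (x : T).

Lemma cwt_cst {U : topologicalType} (c : U) : cwt A (fun _ => c) x.
Proof. exact: cvg_cst. Qed.

Lemma cwtD (f g : T -> R) : cwt A f x -> cwt A g x -> cwt A (fun y => f y + g y) x.
Proof. by move=> cf cg; apply: cvgD. Qed.

Lemma cwtB (f g : T -> R) : cwt A f x -> cwt A g x -> cwt A (fun y => f y - g y) x.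
Proof. by move=> cf cg; apply: cvgB. Qed.

Lemma cwtM (f g : T -> R) : cwt A f x -> cwt A g x -> cwt A (fun y => f y * g y) x.
Proof. by move=> cf cg; apply: cvgM. Qed.

Lemma cwtV (f : T -> R) : f x != 0 -> cwt A f x -> cwt A (fun y => (f y)^-1) x.
Proof. by move=> f0 cf; apply: cvgV. Qed.

Lemma cwt_sum (I : Type) (s : seq I) (P : pred I) (f : I -> T -> R) :
  (forall i, cwt A (f i) x) -> cwt A (fun y => \sum_(i <- s | P i) f i y) x.
Proof.
move=> cf; elim: s => [|i s IH].
  under eq_fun do rewrite big_nil; exact: cwt_cst.
under eq_fun do rewrite big_cons.
case: (P i); last exact: IH.
exact: cwtD.
Qed.

Lemma cwt_prod (I : Type) (s : seq I) (P : pred I) (f : I -> T -> R) :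
  (forall i, cwt A (f i) x) -> cwt A (fun y => \prod_(i <- s | P i) f i y) x.
Proof.
move=> cf; elim: s => [|i s IH].
  under eq_fun do rewrite big_nil; exact: cwt_cst.
under eq_fun do rewrite big_cons.
case: (P i); last exact: IH.
exact: cwtM.
Qed.

Lemma cwt_coord n (f : T -> 'rV[R]_n) i : cwt A f x -> cwt A (fun y => f y ord0 i) x.
Proof.
move=> cf; apply: (@cwt_comp _ _ _ A setT f (fun M : 'rV[R]_n => M ord0 i)) => //.
exact/cwt_cont/coord_continuous.
Qed.

Lemma cwt_sqnorm n (f : T -> 'rV[R]_n) : cwt A f x -> cwt A (fun y => sqnorm (f y)) x.
Proof.
move=> cf; rewrite /sqnorm; apply: cwt_sum => i.
by rewrite /GRing.exp /=; apply: cwtM; apply: cwt_coord.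
Qed.

Lemma cwt_rowB n (f g : T -> 'rV[R]_n) : cwt A f x -> cwt A g x -> cwt A (fun y => f y - g y) x.
Proof. by move=> cf cg; apply: cvgB. Qed.
End cwtR.
Section B2.
Context {R : realType}.

Lemma ln_le_sub1 (t : R) : 0 < t -> ln t <= t - 1.
Proof.
move=> t0; have := expR_ge1Dx (ln t); rewrite lnK ?posrE //.
by move=> H; lra.
Qed.

Lemma xlogx_le0 (t : R) : 0 <= t <= 1 -> xlogx t <= 0.
Proof.
case/andP=> t0 t1; rewrite /xlogx; case: eqP => // _.
by apply: mulr_ge0_le0 => //; apply: ln_le0.
Qed.

Lemma xlogx_bound (t : R) : 0 <= t <= 1 -> t * (1 - t) <= - xlogx t.
Proof.
case/andP=> t0 t1; rewrite /xlogx; case: eqP => [->|/eqP tn0]; first by rewrite mul0r oppr0.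
have tp : 0 < t by rewrite lt_neqAle eq_sym tn0.
rewrite -mulrN ler_pM2l //; have := @ln_le_sub1 t tp; lra.
Qed.

Lemma xlogx01 (t : R) : t = 0 \/ t = 1 -> xlogx t = 0.
Proof. by rewrite /xlogx => -[->|->]; rewrite ?eqxx // oner_eq0 ln1 mulr0. Qed.

Lemma onehot n (q : 'I_n -> R) : (forall i, 0 <= q i <= 1) -> \sum_i q i = 1 ->
  \sum_i q i * (1 - q i) <= 0 -> exists i0, forall i, q i = (i == i0)%:R.
Proof.
move=> q01 q1 qG.
have G0 : forall i, q i * (1 - q i) = 0.
  have h : forall i, 0 <= q i * (1 - q i).
    by move=> i; case/andP: (q01 i) => a b; rewrite mulr_ge0 // subr_ge0.
  have : \sum_i q i * (1 - q i) = 0 by apply/eqP; rewrite eq_le qG sumr_ge0.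
  by move/psumr_eq0P => H i; apply: H.
have q01' : forall i, q i = 0 \/ q i = 1.
  move=> i; move/eqP: (G0 i); rewrite mulf_eq0 subr_eq0 => /orP[/eqP|/eqP] ->;
  by [left|right].
have [i0 qi0] : exists i0, q i0 = 1.
  apply/not_existsP => H; move: q1; rewrite big1 => [/eqP|i _]; first by rewrite eq_sym oner_eq0.
  by case: (q01' i) => // /H.
exists i0 => i; case: (eqVneq i i0) => [->//|ne].
move: q1; rewrite (bigD1 i0) //= qi0 => /(congr1 (fun z => z - 1)).
rewrite addrC addrK subrr => /psumr_eq0P H; rewrite H //.
by move=> j _; case/andP: (q01 j).
Qed.
End B2.
Section C.
Context {R : realType} {d d' k kh : nat}.
Variable (g : 'rV[R]_d -> 'I_k -> 'rV[R]_d').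

Definition emb (ah : 'I_kh) : option 'I_k := insub (val ah).
Definition Dq (ah : 'I_kh) x (x' : 'rV[R]_d') : R :=
  if emb ah is Some a then sqnorm (x' - g x a) else 1.
Definition wq ah x x' := \prod_(b | b != ah) Dq b x x'.
Definition Wq x x' := \sum_ah wq ah x x'.
Definition qq ah x x' := wq ah x x' / Wq x x'.

Lemma sqnorm_ge0 n (v : 'rV[R]_n) : 0 <= sqnorm v.
Proof. by apply: sumr_ge0 => i _; rewrite sqr_ge0. Qed.

Lemma sqnorm_eq0 n (v : 'rV[R]_n) : sqnorm v = 0 -> v = 0.
Proof.
move/psumr_eq0P => H; apply/rowP => i; rewrite [in RHS]mxE.
have := H (fun j _ => sqr_ge0 (v ord0 j)) i isT.
by move=> /eqP; rewrite sqrf_eq0 => /eqP.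
Qed.

Lemma sqnorm0 n : sqnorm (0 : 'rV[R]_n) = 0.
Proof. by apply: big1 => i _; rewrite mxE expr0n. Qed.

Lemma Dq_ge0 ah x x' : 0 <= Dq ah x x'.
Proof. by rewrite /Dq; case: (emb ah) => [a|]; [exact: sqnorm_ge0|exact: ler01]. Qed.

Lemma wq_ge0 ah x x' : 0 <= wq ah x x'.
Proof. by apply: prodr_ge0 => b _; exact: Dq_ge0. Qed.

Lemma Dq_eq0 ah x x' : Dq ah x x' = 0 -> exists2 a, emb ah = Some a & x' = g x a.
Proof.
rewrite /Dq; case: (emb ah) => [a|/eqP]; last by rewrite oner_eq0.
by move/sqnorm_eq0/eqP; rewrite subr_eq0 => /eqP ->; exists a.
Qed.

Lemma emb_val ah a : emb ah = Some a -> val ah = val a.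
Proof. by rewrite /emb; case: insubP => // u _ <- [<-]. Qed.

Lemma emb_widen (le : (k <= kh)%N) a : emb (widen_ord le a) = Some a.
Proof. by rewrite /emb /= valK. Qed.


Lemma Wq_pos (k0 : 'I_kh) x x' :
  (forall a1 a2, a1 <> a2 -> g x a1 <> g x a2) -> 0 < Wq x x'.
Proof.
move=> A2; have W0 : 0 <= Wq x x' by apply: sumr_ge0 => i _; exact: wq_ge0.
rewrite lt_neqAle W0 andbT eq_sym; apply/negP => /eqP WZ.
have Hw := psumr_eq0P (fun i _ => wq_ge0 i x x') WZ.
have /eqP/prodf_eq0 [b bne /eqP Db0] := Hw k0 isT.
have [a1 e1 x1] := Dq_eq0 _ _ _ Db0.
have /eqP/prodf_eq0 [c cne /eqP Dc0] := Hw b isT.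
have [a2 e2 x2] := Dq_eq0 _ _ _ Dc0.
apply: (A2 a1 a2); last by rewrite -x1 -x2.
move=> e12; move/negP: cne; apply; apply/eqP/val_inj.
by rewrite (emb_val _ _ e1) (emb_val _ _ e2) e12.
Qed.

Lemma qq_hit (le : (k <= kh)%N) x a ah :
  (forall a1 a2, a1 <> a2 -> g x a1 <> g x a2) ->
  qq ah x (g x a) = (ah == widen_ord le a)%:R.
Proof.
move=> A2; set a' := widen_ord le a.
have Da' : Dq a' x (g x a) = 0 by rewrite /Dq emb_widen subrr sqnorm0.
have Wp := Wq_pos a' x (g x a) A2.
have wz : forall b, b != a' -> wq b x (g x a) = 0.
  move=> b nb; rewrite /wq (bigD1 a'); last by rewrite eq_sym.
  by rewrite Da'; exact: mul0r.
case: (boolP (ah == a')) => [/eqP E|ne]; last by rewrite /qq wz // mul0r.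
have WE : Wq x (g x a) = wq a' x (g x a).
  by rewrite /Wq (bigD1 a') //= big1 ?addr0 // => b /wz.
by rewrite E /qq -WE divff // gt_eqF.
Qed.
End C.

Lemma competitor (R : realType) d d' k kh (p : 'rV[R]_d -> R)
  (pi : 'I_k -> 'rV[R]_d -> R) (g : 'rV[R]_d -> 'I_k -> 'rV[R]_d') (beta : R)
  (a0 : 'I_k) (le : (k <= kh)%N) :
  (forall x a, cube d x -> cube d' (g x a)) ->
  (forall a, {within cube d, continuous (fun x => g x a)}) ->
  (forall x a1 a2, cube d x -> a1 <> a2 -> g x a1 <> g x a2) ->
  exists (gh' : 'rV[R]_d -> 'I_kh -> 'rV[R]_d') (qh' : 'I_kh -> 'rV[R]_d -> 'rV[R]_d' -> R), inG gh' /\ inQ qh' /\ objective beta p pi g gh' qh' = 0%E.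
Proof.
move=> gc A1 A2.
pose gh' x (ah : 'I_kh) := g x (odflt a0 (emb ah)).
exists gh', (@qq R d d' k kh g).
have Wp : forall x x', cube d x -> 0 < @Wq R d d' k kh g x x'.
  by move=> x x' cx; exact: (Wq_pos g (widen_ord le a0) x x' (fun a1 a2 => A2 x a1 a2 cx)).
split; [split|split; [split; [|split]|]].
- by move=> x ah cx; apply: gc.
- by move=> ah; exact: A1.
- move=> ah x x' cx cx'; have W0 := Wp x x' cx; apply/andP; split.
    by rewrite divr_ge0 ?wq_ge0 // ltW.
  rewrite ler_pdivrMr // mul1r /Wq (bigD1 ah) //= lerDl.
  by apply: sumr_ge0 => i _; exact: wq_ge0.
- move=> x x' cx cx'; rewrite /qq -mulr_suml divff //.
  by rewrite gt_eqF // Wp.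
- have cw : forall (ah : 'I_kh) (z : 'rV[R]_d * 'rV[R]_d'), cube d z.1 /\ cube d' z.2 ->
      cwt [set z : 'rV[R]_d * 'rV[R]_d' | cube d z.1 /\ cube d' z.2]
        (fun z => @wq R d d' k kh g ah z.1 z.2) z.
    move=> ah z [cz1 cz2]; apply: cwt_prod => b /=; rewrite /Dq.
    case: (emb b) => [a|]; last exact: cwt_cst.
    apply: cwt_sqnorm; apply: cwt_rowB.
      by apply: cwt_cont; exact: cvg_snd.
    apply: (@cwt_comp _ _ _ _ (cube d) fst (fun x => g x a)).
    + by apply: cwt_cont; exact: cvg_fst.
    + by move=> y [].
    + exact: cwt_of.
  move=> ah; apply: cwt_to => z zS; rewrite /qq; apply: cwtM; first exact: cw.
  apply: cwtV; first by rewrite gt_eqF // Wp //; case: zS.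
  by apply: cwt_sum => b; exact: cw.
- rewrite /objective; apply: cube_int_eq0 => x cx; congr EFin.
  apply: big1 => a _.
  have -> : \sum_(ah < kh) qq g ah x (g x a) * sqnorm (g x a - gh' x ah) = 0.
    apply: big1 => ah _; rewrite (qq_hit _ le) //; last exact: (fun a1 a2 => A2 x a1 a2 cx).
    case: eqP => [->|_]; last by rewrite mul0r.
    by rewrite /gh' emb_widen /= subrr sqnorm0 mulr0.
  have -> : entropy (@qq R d d' k kh g) x (g x a) = 0.
    rewrite /entropy big1 ?oppr0 // => ah _; rewrite (qq_hit _ le); last exact: (fun a1 a2 => A2 x a1 a2 cx).
    by apply: xlogx01; case: (_ == _); [right|left].
  by rewrite mulr0 addr0 mulr0.
Qed.
Lemma key_pos (R : realType) d k (p : 'rV[R]_d -> R) (pi : 'I_k -> 'rV[R]_d -> R)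
  (F : 'rV[R]_d -> R) a x0 (h : 'rV[R]_d -> R) :
  (forall x, cube d x -> 0 <= p x) -> (forall a x, cube d x -> 0 <= pi a x) ->
  (forall x, cube d x -> 0 <= F x) ->
  supp_a p pi a -> supp_x_a p pi a x0 ->
  cwt (cube d) h x0 -> 0 < h x0 ->
  (forall y, cube d y -> 0 <= h y -> p y * pi a y * h y <= F y) ->
  (0 < cube_int (fun x => (F x)%:E))%E.
Proof.
move=> p0 pi0 F0 sa [cx0 sx] ch hx0 hF.
set c := fine (pa p pi a).
have c_cases : c = 0 \/ 0 < c.
  move: sa; rewrite /supp_a /= /c; case: (pa p pi a) => [r|_|//].
    by rewrite lte_fin => r0; right.
  by left.
have pc0 : forall y, cube d y -> 0 <= pcond p pi a y.
  move=> y cy; rewrite /pcond -/c; case: c_cases => [->|cp].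
    by rewrite invr0 mulr0.
  by rewrite divr_ge0 ?mulr_ge0 ?p0 ?pi0 // ltW.
case: c_cases => [c0|cp].
  have := sx setT openT I; rewrite cube_int_eq0 ?lt_irreflexive // => y _.
  by rewrite /pcond -/c c0 invr0 mulr0 mulr0.
set eta := h x0 / 2.
have eta0 : 0 < eta by rewrite divr_gt0.
have : \forall y \near within (cube d) (nbhs x0), `|h x0 - h y| < eta.
  by apply: cvgr_dist_lt => //; exact: ch.
rewrite near_withinE nbhsE => -[V [oV Vx0] Vsub].
have Ipos := sx V oV Vx0.
have L1 : (cube_int (fun x => (eta * c)%:E * (\1_V x * pcond p pi a x)%:E) <=
   cube_int (fun x => (F x)%:E))%E.
  apply: cube_int_le => y cy; apply/andP; split.
    rewrite -EFinM lee_fin; apply: mulr_ge0; first by apply: mulr_ge0; apply: ltW.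
    by apply: mulr_ge0; [rewrite indicE ler0n|exact: pc0].
  rewrite -EFinM lee_fin indicE; case: (boolP (y \in V)) => [/set_mem Vy|_]; last first.
    by rewrite mul0r mulr0 F0.
  have hy : eta < h y.
    have := Vsub y Vy cy; rewrite /eta; move=> H; rewrite ltr_distlC in H.
    by case/andP: H => H1 _; move: H1; rewrite /eta; lra.
  have E : eta * c * (1 * (p y * pi a y / c)) = eta * (p y * pi a y).
    by field; rewrite gt_eqF.
  rewrite /pcond -/c E; have ppi : 0 <= p y * pi a y by rewrite mulr_ge0 ?p0 ?pi0.
  have hy0 : 0 <= h y by apply: ltW; apply: lt_trans hy.
  apply: le_trans (hF y cy hy0); rewrite (mulrC eta).
  by apply: ler_wpM2l => //; apply: ltW.
apply: lt_le_trans L1.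
apply: (lt_le_trans _ (@cube_int_scale R d _ (eta * c) _ _)).
- by rewrite mule_gt0 // lte_fin mulr_gt0.
- by rewrite mulr_ge0 // ltW.
- by move=> y cy; rewrite lee_fin mulr_ge0 ?pc0 // indicE ler0n.
Qed.
Lemma val01_close (R : realType) (v w : R) : (v = 0 \/ v = 1) -> (w = 0 \/ w = 1) ->
  `|v - w| < 1/2 -> w = v.
Proof.
case=> ->; case=> -> //; rewrite ?subr0 ?sub0r ?normrN normr1 => H; exfalso; move: H; lra.
Qed.

Lemma const_conn (R : realType) d (A S : set 'rV[R]_d) (phi : 'rV[R]_d -> R) :
  S `<=` A -> connected S -> (forall x, S x -> cwt A phi x) ->
  (forall x, S x -> phi x = 0 \/ phi x = 1) ->
  forall x1 x2, S x1 -> S x2 -> phi x1 = phi x2.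
Proof.
move=> SA cS cphi p01.
pose Fam (v : R) := [set U : set 'rV[R]_d | open U /\ forall z, U z -> A z -> `|v - phi z| < 1/2].
pose C v := \bigcup_(U in Fam v) U.
have oC : forall v, open (C v) by move=> v; apply: bigcup_open => U [].
have CE : forall v y, (v = 0 \/ v = 1) -> S y -> C v y <-> phi y = v.
  move=> v y v01 Sy; split.
    move=> [U [_ HU] Uy]; apply: val01_close => //; first exact: p01.
    exact: HU _ Uy (SA _ Sy).
  move=> ev.
  have : \forall z \near within A (nbhs y), `|phi y - phi z| < 1/2.
    by apply: cvgr_dist_lt => //; exact: cphi.
  rewrite near_withinE nbhsE => -[U [oU Uy] Usub].
  exists U => //; split => // z Uz Az; rewrite -ev; exact: Usub.
have main : forall y1 y2, S y1 -> S y2 -> phi y1 = 1 -> phi y2 = 1.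
  move=> y1 y2 S1 S2 e1.
  pose B := [set y | S y /\ phi y = 1].
  have BS : B = S.
    apply: cS.
    - by exists y1.
    - exists (C 1) => //; apply/seteqP; split => y /=.
        by move=> [Sy ey]; split => //; apply/(CE 1 y (or_intror erefl) Sy).
      by move=> [Sy Cy]; split => //; apply/(CE 1 y (or_intror erefl) Sy).
    - exists (~` C 0); first exact: open_closedC.
      apply/seteqP; split => y /=.
        move=> [Sy ey]; split => // /(CE 0 y (or_introl erefl) Sy); rewrite ey.
        by move/eqP; rewrite oner_eq0.
      move=> [Sy nC]; split => //; case: (p01 y Sy) => // e0; exfalso; apply: nC.
      exact/(CE 0 y (or_introl erefl) Sy).
  have : B y2 by rewrite BS.
  by move=> [].
move=> x1 x2 S1 S2.
case: (p01 x1 S1) => e1; case: (p01 x2 S2) => e2; rewrite ?e1 ?e2 //.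
- by move: (main x2 x1 S2 S1 e2); rewrite e1 => /eqP; rewrite eq_sym oner_eq0.
- by move: (main x1 x2 S1 S2 e1); rewrite e2 => /eqP; rewrite eq_sym oner_eq0.
Qed.
Theorem theorem1 (R : realType) (d d' k kh : nat)
  (p : 'rV[R]_d -> R) (pi : 'I_k -> 'rV[R]_d -> R)
  (g : 'rV[R]_d -> 'I_k -> 'rV[R]_d') (beta : R)
  (gh : 'rV[R]_d -> 'I_kh -> 'rV[R]_d') (qh : 'I_kh -> 'rV[R]_d -> 'rV[R]_d' -> R) :
  (* data-generating process *)
  (forall x, cube d x -> 0 <= p x) -> borel_fun p ->
  cube_int (fun x => (p x)%:E) = 1%E ->
  (forall a x, cube d x -> 0 <= pi a x) ->
  (forall x, cube d x -> \sum_(a < k) pi a x = 1) ->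
  (forall a, borel_fun (pi a)) ->
  (forall x a, cube d x -> cube d' (g x a)) ->
  (* hat k >= k, beta > 0 *)
  (k <= kh)%N -> 0 < beta ->
  (* (gh, qh) is a minimizer over G x Q *)
  inG gh -> inQ qh ->
  (forall (gh' : 'rV[R]_d -> 'I_kh -> 'rV[R]_d') (qh' : 'I_kh -> 'rV[R]_d -> 'rV[R]_d' -> R),
     inG gh' -> inQ qh' ->
     (objective beta p pi g gh qh <= objective beta p pi g gh' qh')%E) ->
  let A1 := forall a, {within cube d, continuous (fun x => g x a)} in
  let A2 := forall x a1 a2, cube d x -> a1 <> a2 -> g x a1 <> g x a2 in
  let A3 := forall a, supp_a p pi a -> connected (supp_x_a p pi a) in
  let A4 := forall a1 a2, supp_a p pi a1 -> supp_a p pi a2 ->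
              supp_x_a p pi a1 `&` supp_x_a p pi a2 !=set0 in
  (* part 1 *)
  (A1 -> A2 ->
    exists v : 'rV[R]_d -> 'I_k -> 'I_kh,
      forall x a, supp_xa p pi x a -> forall ah : 'I_kh,
        qh ah x (g x a) = (ah == v x a)%:R) /\
  (* part 2 *)
  (A1 -> A2 -> A3 ->
    exists v : 'I_k -> 'I_kh,
      forall x a, supp_xa p pi x a -> forall ah : 'I_kh,
        qh ah x (g x a) = (ah == v a)%:R) /\
  (* part 3: the map of part 2 is injective on supp[p(a)] *)
  (A1 -> A2 -> A3 -> A4 ->
    forall v : 'I_k -> 'I_kh,
      (forall x a, supp_xa p pi x a -> forall ah : 'I_kh,
        qh ah x (g x a) = (ah == v a)%:R) ->
      {in supp_a p pi &, injective v}).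
Proof.
move=> p0 _ _ pi0 pi1 _ gc le beta0 [ghc ghcont] qQ hmin A1 A2 A3 A4.
have [q01 [qsum qcont]] := qQ.
have cube0 : cube d (0 : 'rV[R]_d) by move=> i; rewrite mxE lexx ler01.
have k0 : (0 < k)%N.
  case: (posnP k) => // k0; move: (pi1 0 cube0).
  rewrite big_pred0; last by move=> i; move: (ltn_ord i); rewrite {2}k0.
  by move=> /eqP; rewrite eq_sym oner_eq0.
pose a0 : 'I_k := Ordinal k0.
pose L a y := \sum_(ah < kh) qh ah y (g y a) * sqnorm (g y a - gh y ah).
pose Hn a y := entropy qh y (g y a).
pose F y := \sum_(a < k) p y * pi a y * (L a y + beta * Hn a y).
have objE : objective beta p pi g gh qh = cube_int (fun x => (F x)%:E) by [].
have L0 : forall a y, cube d y -> 0 <= L a y.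
  move=> a y cy; apply: sumr_ge0 => ah _; apply: mulr_ge0; last exact: sqnorm_ge0.
  by case/andP: (q01 ah y (g y a) cy (gc y a cy)).
have H0 : forall a y, cube d y -> 0 <= Hn a y.
  move=> a y cy; rewrite /Hn /entropy oppr_ge0; apply: sumr_le0 => ah _.
  by apply: xlogx_le0; apply: q01 => //; exact: gc.
have T0 : forall a y, cube d y -> 0 <= p y * pi a y * (L a y + beta * Hn a y).
  move=> a y cy; apply: mulr_ge0; first by rewrite mulr_ge0 ?p0 ?pi0.
  by rewrite addr_ge0 ?L0 // mulr_ge0 ?H0 // ltW.
have F0 : forall y, cube d y -> 0 <= F y.
  by move=> y cy; apply: sumr_ge0 => a _; exact: T0.
have Fa : forall a y, cube d y -> p y * pi a y * (L a y + beta * Hn a y) <= F y.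
  move=> a y cy; rewrite /F (bigD1 a) //= lerDl.
  by apply: sumr_ge0 => b _; exact: T0.
have contra : A1 -> A2 -> forall a x0 (h : 'rV[R]_d -> R), supp_a p pi a -> supp_x_a p pi a x0 ->
    cwt (cube d) h x0 -> 0 < h x0 ->
    (forall y, cube d y -> 0 <= h y -> h y <= L a y + beta * Hn a y) -> False.
  move=> hA1 hA2 a x0 h sa sx ch hx hle.
  have [gh' [qh' [G' [Q' O']]]] := competitor _ _ _ _ _ p pi g beta a0 le gc hA1 hA2.
  have := hmin _ _ G' Q'; rewrite O' objE => ob.
  have : (0 < cube_int (fun x => (F x)%:E))%E.
    apply: (key_pos _ _ _ _ _ _ _ _ _ p0 pi0 F0 sa sx ch hx) => y cy hy.
    apply: le_trans (Fa a y cy); apply: ler_wpM2l; first by rewrite mulr_ge0 ?p0 ?pi0.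
    exact: hle.
  by rewrite ltNge ob.
have cq : A1 -> forall ah a x, cube d x -> cwt (cube d) (fun y => qh ah y (g y a)) x.
  move=> hA1 ah a x cx.
  apply: (@cwt_comp _ _ _ (cube d) [set z : 'rV[R]_d * 'rV[R]_d' | cube d z.1 /\ cube d' z.2]
     (fun y => (y, g y a)) (fun z => qh ah z.1 z.2)).
  - apply: cwt_pair; first by apply: cwt_cont; exact: cvg_id.
    exact: cwt_of (hA1 a) cx.
  - by move=> y cy; split => //=; exact: gc.
  - by apply: cwt_of (qcont ah) _; split => //=; exact: gc.
have core1 : A1 -> A2 -> forall x a, supp_xa p pi x a ->
    exists ah0 : 'I_kh, forall ah, qh ah x (g x a) = (ah == ah0)%:R.
  move=> hA1 hA2 x a [sa sx]; have cx := sx.1.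
  have cgx := gc x a cx.
  apply: (@onehot R kh (fun ah => qh ah x (g x a))).
  - by move=> i; exact: q01.
  - exact: qsum.
  rewrite leNgt; apply/negP => Gpos.
  apply: (contra hA1 hA2 a x (fun y => beta * \sum_(ah < kh) qh ah y (g y a) * (1 - qh ah y (g y a)))) => //.
  - apply: cwtM; first exact: cwt_cst.
    apply: cwt_sum => ah; apply: cwtM; first exact: cq.
    by apply: cwtB; [exact: cwt_cst|exact: cq].
  - by rewrite mulr_gt0.
  move=> y cy _; apply: le_trans (_ : beta * Hn a y <= _); last by rewrite lerDr L0.
  apply: ler_wpM2l; first exact: ltW.
  rewrite /Hn /entropy -sumrN; apply: ler_sum => ah _; apply: xlogx_bound.
  by apply: q01 => //; exact: gc.
have P1 : A1 -> A2 ->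
    exists v : 'rV[R]_d -> 'I_k -> 'I_kh,
      forall x a, supp_xa p pi x a -> forall ah : 'I_kh,
        qh ah x (g x a) = (ah == v x a)%:R.
  move=> hA1 hA2.
  have [v Hv] := @choice _ _ (fun (xa : 'rV[R]_d * 'I_k) (ah0 : 'I_kh) =>
     supp_xa p pi xa.1 xa.2 -> forall ah, qh ah xa.1 (g xa.1 xa.2) = (ah == ah0)%:R)
     (fun xa => match pselect (supp_xa p pi xa.1 xa.2) with
        | left s => let: ex_intro ah0 H := core1 hA1 hA2 _ _ s in ex_intro _ ah0 (fun _ => H)
        | right ns => ex_intro _ (widen_ord le a0) (fun s => False_ind _ (ns s))
        end).
  by exists (fun x a => v (x, a)) => x a s ah; exact: (Hv (x, a) s).
have cst : A1 -> A2 -> A3 -> forall a, supp_a p pi a -> forall x1 x2,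
    supp_x_a p pi a x1 -> supp_x_a p pi a x2 -> forall ah,
    qh ah x1 (g x1 a) = qh ah x2 (g x2 a).
  move=> hA1 hA2 hA3 a sa x1 x2 s1 s2 ah.
  apply: (@const_conn R d (cube d) (supp_x_a p pi a) (fun y => qh ah y (g y a))) => //.
  - by move=> y [].
  - exact: hA3.
  - by move=> y [cy _]; exact: cq.
  - move=> y sy; have [ah0 H] := core1 hA1 hA2 y a (conj sa sy).
    by rewrite H; case: (_ == _); [right|left].
split; first exact: P1.
split.
  move=> hA1 hA2 hA3; have [v Hv] := P1 hA1 hA2.
  exists (fun a => v (xget (0 : 'rV[R]_d) [set x | supp_xa p pi x a]) a).
  move=> x a s ah; set xs := xget _ _.
  have sxs : supp_xa p pi xs a by exact: (@xgetPex _ (0 : 'rV[R]_d) [set x | supp_xa p pi x a] (ex_intro _ x s)).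
  rewrite (cst hA1 hA2 hA3 a s.1 x xs s.2 sxs.2 ah); exact: Hv.
move=> hA1 hA2 hA3 hA4 v Hv a1 a2 /set_mem s1 /set_mem s2 e.
apply: contrapT => ne.
have [x [x1 x2]] := hA4 a1 a2 s1 s2.
have cx := x1.1.
set w := v a1.
have q1 : qh w x (g x a1) = 1 by rewrite (Hv x a1 (conj s1 x1)) eqxx.
have q2 : qh w x (g x a2) = 1 by rewrite (Hv x a2 (conj s2 x2)) /w e eqxx.
have gne : g x a1 <> g x a2 := hA2 x a1 a2 cx ne.
have key : forall ai, supp_a p pi ai -> supp_x_a p pi ai x -> qh w x (g x ai) = 1 ->
    g x ai - gh x w != 0 -> False.
  move=> ai sai sxi qi nz.
  apply: (contra hA1 hA2 ai x (fun y => qh w y (g y ai) * sqnorm (g y ai - gh y w))) => //.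
  - apply: cwtM; first exact: cq.
    apply: cwt_sqnorm; apply: cwt_rowB; first exact: cwt_of (hA1 ai) cx.
    exact: cwt_of (ghcont w) cx.
  - rewrite qi mul1r lt_neqAle sqnorm_ge0 andbT eq_sym.
    by apply/eqP => /sqnorm_eq0 /eqP; apply/negP.
  move=> y cy _; apply: le_trans (_ : L ai y <= _); last first.
    by rewrite lerDl mulr_ge0 ?H0 // ltW.
  rewrite /L (bigD1 w) //= lerDl; apply: sumr_ge0 => ah _; apply: mulr_ge0.
    by case/andP: (q01 ah y (g y ai) cy (gc y ai cy)).
  exact: sqnorm_ge0.
case: (eqVneq (g x a1 - gh x w) 0) => [z1|nz1]; last exact: key a1 s1 x1 q1 nz1.
case: (eqVneq (g x a2 - gh x w) 0) => [z2|nz2]; last exact: key a2 s2 x2 q2 nz2.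
apply: gne; move/eqP: z1; move/eqP: z2; rewrite !subr_eq0 => /eqP -> /eqP ->.
by [].
Qed.
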